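(* There is an absolute constant $C$ such that for all integers $1\le k<d$ and $n\ge1$ and every $B\in\mathbb R^{n\times d}$, there exist $k$ distinct standard basis vectors of $\mathbb R^d$ such that the matrix $P\in\mathbb R^{d\times k}$ having them as columns satisfies \[\|B-(BP)(BP)^\dagger B\|_F^2\le C\,kd\,\|B-[B]_k\|_F^2.\]
   Context: $M^\dagger$ denotes the Moore–Penrose pseudo-inverse, and $[B]_k$ denotes a best approximation of $B$ of rank at most $k$ in Frobenius norm. *)

(* Defs.v *)
From HB Require Import structures.
From mathcomp Require Import all_boot all_order all_algebra.
From mathcomp Require Import Rstruct.
From Stdlib Require Import ClassicalEpsilon.
From Stdlib Require Reals.
Set Implicit Arguments. Unset Strict Implicit. Unset Printing Implicit Defensive.
Import Order.TTheory GRing.Theory Num.Theory.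
Local Open Scope ring_scope.

Notation RR := Reals.Rdefinitions.R.

Definition frob2 (m n : nat) (A : 'M[RR]_(m, n)) : RR :=
  \sum_(i < m) \sum_(j < n) A i j ^+ 2.

(* Penrose conditions (real matrices: adjoint = transpose). *)
Definition is_pinv (m n : nat) (A : 'M[RR]_(m, n)) (X : 'M[RR]_(n, m)) : Prop :=
  [/\ A *m X *m A = A, X *m A *m X = X,
      (A *m X)^T = A *m X & (X *m A)^T = X *m A].

Definition pinv (m n : nat) (A : 'M[RR]_(m, n)) : 'M[RR]_(n, m) :=
  epsilon (inhabits 0) (is_pinv A).

Definition is_best_rank_approx (m n k : nat) (B M : 'M[RR]_(m, n)) : Prop :=
  (\rank M <= k)%N /\
  forall N : 'M[RR]_(m, n), (\rank N <= k)%N -> frob2 (B - M) <= frob2 (B - N).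

Definition best_rank_approx (m n : nat) (k : nat) (B : 'M[RR]_(m, n)) : 'M[RR]_(m, n) :=
  epsilon (inhabits 0) (is_best_rank_approx k B).

Definition sel_mx (d k : nat) (f : 'I_k -> 'I_d) : 'M[RR]_(d, k) :=
  \matrix_(i < d, j < k) (i == f j)%:R.

(* Main.v *)
From Pilot Require Import Defs.
From HB Require Import structures.
From mathcomp Require Import all_boot all_order all_algebra.
From mathcomp Require Import Rstruct.
From Stdlib Require Import ClassicalEpsilon.
From mathcomp Require Import all_classical all_reals all_analysis.
From mathcomp Require Import Rstruct_topology.
From mathcomp Require Import lra zify.
Import Pilot.Defs.
Import Order.TTheory GRing.Theory Num.Theory.
Import numFieldNormedType.Exports.
Set Implicit Arguments. Unset Strict Implicit. Unset Printing Implicit Defensive.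
Local Open Scope ring_scope.

Lemma frob2_tr m n (X : 'M[RR]_(m, n)) : frob2 X = \tr (X^T *m X).
Proof.
rewrite /frob2 /mxtrace exchange_big /=; apply: eq_bigr => j _.
rewrite mxE; apply: eq_bigr => i _; by rewrite !mxE expr2.
Qed.

Lemma frob2_ge0 m n (X : 'M[RR]_(m, n)) : 0 <= frob2 X.
Proof. by apply: sumr_ge0 => i _; apply: sumr_ge0 => j _; apply: sqr_ge0. Qed.

Lemma free_gram_unit r n (G : 'M[RR]_(r, n)) : row_free G -> G *m G^T \in unitmx.
Proof.
move=> fG; rewrite -row_free_unit; apply: inj_row_free => v.
rewrite mulmxA => H.
have H2 : (v *m G) *m (v *m G)^T = 0 by rewrite trmx_mul mulmxA H mul0mx.
have: v *m G = 0.
  move: H2; move: (v *m G) => w H2.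
  apply/matrixP => i j; rewrite ord1 [RHS]mxE.
  move/matrixP: H2 => /(_ 0 0); rewrite mxE [RHS]mxE => /eqP.
  rewrite psumr_eq0; last by move=> l _; rewrite mxE -expr2 sqr_ge0.
  move/allP => /(_ j (mem_index_enum _)) /implyP /(_ isT).
  by rewrite mxE -expr2 sqrf_eq0 => /eqP.
by move/eqP; rewrite mulmx_free_eq0 // => /eqP.
Qed.

Lemma pinv_exists_fact m n r (F : 'M[RR]_(m, r)) (G : 'M[RR]_(r, n)) :
  G *m G^T \in unitmx -> F^T *m F \in unitmx -> exists X, is_pinv (F *m G) X.
Proof.
move=> uG uF.
set iG := invmx (G *m G^T); set iF := invmx (F^T *m F).
exists (G^T *m iG *m iF *m F^T).
have eAX : F *m G *m (G^T *m iG *m iF *m F^T) = F *m iF *m F^T.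
  by rewrite -!mulmxA (mulmxA G) (mulmxA (G *m G^T)) mulmxV // mul1mx.
have eXA : (G^T *m iG *m iF *m F^T) *m (F *m G) = G^T *m iG *m G.
  by rewrite !mulmxA -(mulmxA _ F^T) -(mulmxA _ iF) mulVmx // mulmx1.
have siF : iF^T = iF by rewrite /iF trmx_inv trmx_mul trmxK.
have siG : iG^T = iG by rewrite /iG trmx_inv trmx_mul trmxK.
split.
- rewrite eAX !mulmxA -(mulmxA _ F^T) -(mulmxA _ iF) mulVmx // mulmx1 //.
- rewrite eXA -!mulmxA (mulmxA G) (mulmxA (G *m G^T)) mulmxV // mul1mx //.
- by rewrite eAX !trmx_mul trmxK siF mulmxA.
- by rewrite eXA !trmx_mul trmxK siG mulmxA.
Qed.

Lemma pinv_exists m n (A : 'M[RR]_(m, n)) : exists X, is_pinv A X.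
Proof.
rewrite -(mulmx_base A); apply: pinv_exists_fact.
  by apply: free_gram_unit; apply: row_base_free.
rewrite -[X in _ *m X]trmxK; apply: free_gram_unit.
by rewrite /row_free mxrank_tr; have := col_base_full A; rewrite /row_full.
Qed.

Lemma pinvP m n (A : 'M[RR]_(m, n)) : is_pinv A (pinv A).
Proof.
rewrite /pinv; apply: epsilon_spec.
by have [X HX] := pinv_exists A; exists X.
Qed.

Lemma proj_min n k d (A : 'M[RR]_(n, k)) (X : 'M[RR]_(k, n)) (M : 'M[RR]_(n, d))
   (Y : 'M[RR]_(k, d)) :
  is_pinv A X -> frob2 (M - A *m X *m M) <= frob2 (M - A *m Y).
Proof.
case=> h1 _ h3 _.
set Q := A *m X.
have QA : Q *m A = A by [].
have QQ : Q *m Q = Q by rewrite /Q mulmxA h1.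
set W := M - A *m Y.
have e1 : M - Q *m M = (1%:M - Q) *m W.
  rewrite /W mulmxBl mul1mx !mulmxBr mulmxA QA.
  by rewrite opprB addrA subrK.
clearbody W.
have eW : W = (1%:M - Q) *m W + Q *m W by rewrite -mulmxDl subrK mul1mx.
have cross : ((1%:M - Q) *m W)^T *m (Q *m W) = 0.
  have tQ : (1%:M - Q)^T = 1%:M - Q by rewrite linearB /= trmx1 h3.
  rewrite trmx_mul tQ -mulmxA (mulmxA (1%:M - Q)).
  by rewrite mulmxBl mul1mx QQ subrr mul0mx mulmx0.
have cross2 : (Q *m W)^T *m ((1%:M - Q) *m W) = 0.
  by rewrite -[LHS]trmxK trmx_mul trmxK cross trmx0.
have hW : frob2 W = frob2 ((1%:M - Q) *m W) + frob2 (Q *m W).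
  rewrite !frob2_tr; have -> := congr1 (fun Z => \tr (Z^T *m Z)) eW.
  move: cross cross2; move: ((1%:M - Q) *m W) (Q *m W) => P S c1 c2.
  by rewrite /= mulmxDr [(P + S)^T]linearD /= !mulmxDl c1 c2 addr0 add0r mxtraceD.
rewrite e1 hW lerDl; exact: frob2_ge0.
Qed.
Lemma cs_step (m s y Q : RR) : 0 <= m -> 0 <= Q -> s ^+ 2 <= m * Q ->
  (s + y) ^+ 2 <= (m + 1) * (Q + y ^+ 2).
Proof.
move=> m0 Q0 h.
have [me|mp] := eqVneq m 0.
  rewrite me mul0r in h *.
  have h2 := h; have s0 : s = 0.
    by apply/eqP; rewrite -sqrf_eq0 eq_le h2 sqr_ge0.
  by rewrite s0 add0r add0r mul1r lerDr.
have mpos : 0 < m by rewrite lt_def mp m0.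
have key : 0 <= m * (Q + m * y ^+ 2 - 2 * s * y).
  have : 0 <= (s - m * y) ^+ 2 by apply: sqr_ge0.
  nra.
have : 0 <= Q + m * y ^+ 2 - 2 * s * y.
  by rewrite -(pmulr_rge0 _ mpos).
nra.
Qed.

Lemma cs (m : nat) (y : 'I_m -> RR) : (\sum_i y i) ^+ 2 <= m%:R * \sum_i y i ^+ 2.
Proof.
elim: m y => [|m IH] y; first by rewrite !big_ord0 expr0n /= mul0r.
rewrite !big_ord_recr /= -[m.+1%:R]natr1.
apply: cs_step.
- exact: ler0n.
- by apply: sumr_ge0 => i _; apply: sqr_ge0.
- exact: IH.
Qed.
Lemma sel_mxE n d k (E : 'M[RR]_(n, d)) (f : 'I_k -> 'I_d) p i :
  (E *m sel_mx f) p i = E p (f i).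
Proof.
rewrite mxE (bigD1 (f i)) //= mxE eqxx mulr1 big1 ?addr0 // => l /negbTE hl.
by rewrite mxE hl mulr0.
Qed.

Lemma sum_inj_le k d (f : 'I_k -> 'I_d) (F : 'I_d -> RR) :
  injective f -> (forall j, 0 <= F j) -> \sum_i F (f i) <= \sum_j F j.
Proof.
move=> injf F0.
have -> : \sum_i F (f i) = \sum_(j in f @: (finset.setT : {set 'I_k})) F j.
  by rewrite big_imset /=; [apply: eq_bigl => i; rewrite inE | move=> x y _ _; apply: injf].
rewrite [X in _ <= X](bigID (fun j => j \in f @: (finset.setT : {set 'I_k}))) /= lerDl.
by apply: sumr_ge0 => j _.
Qed.

Lemma resid_bound n d k (E : 'M[RR]_(n, d)) (f : 'I_k -> 'I_d) (Y : 'M[RR]_(k, d)) :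
  injective f -> (forall i j, `|Y i j| <= 1) ->
  frob2 (E - E *m sel_mx f *m Y) <= ((k.+1) * (d.+1))%:R * frob2 E.
Proof.
move=> injf Yb.
have entry : forall p j, (E - E *m sel_mx f *m Y) p j ^+ 2 <=
    k.+1%:R * (E p j ^+ 2 + \sum_i E p (f i) ^+ 2).
  move=> p j; rewrite !mxE.
  have -> : \sum_i (E *m sel_mx f) p i * Y i j = \sum_i E p (f i) * Y i j.
    by apply: eq_bigr => i _; rewrite sel_mxE.
  rewrite addrC -[k.+1%:R]natr1 [E p j ^+ 2 + _]addrC.
  apply: (@le_trans _ _ ((k%:R + 1) * (\sum_i (E p (f i) * Y i j) ^+ 2 + E p j ^+ 2))).
    apply: cs_step; first exact: ler0n.
      by apply: sumr_ge0 => i _; apply: sqr_ge0.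
    by rewrite sqrrN; apply: cs.
  apply: ler_wpM2l; first by apply: addr_ge0 => //; exact: ler0n.
  rewrite lerD2r; apply: ler_sum => i _.
  rewrite exprMn -[X in _ <= X]mulr1; apply: ler_wpM2l; first exact: sqr_ge0.
  rewrite -(expr1n _ 2) -real_normK ?num_real // -[1 ^+ 2]/(1 * 1) expr2.
  by apply: ler_pM => //; apply: normr_ge0.
rewrite /frob2 mulr_sumr; apply: ler_sum => p _.
apply: (@le_trans _ _ (\sum_j k.+1%:R * (E p j ^+ 2 + \sum_i E p (f i) ^+ 2))).
  by apply: ler_sum => j _; apply: entry.
rewrite -mulr_sumr big_split /= sumr_const card_ord natrM -mulrA.
apply: ler_wpM2l; first exact: ler0n.
rewrite -[d.+1%:R]natr1 mulrDl mul1r [X in _ <= X]addrC lerD2l -[in X in X <= _]mulr_natl.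
apply: ler_wpM2l; first exact: ler0n.
apply: sum_inj_le => // j; apply: sqr_ge0.
Qed.
Lemma fin_max (T : finType) (t0 : T) (F : T -> RR) : exists t, forall u, F u <= F t.
Proof.
case: (@Order.TotalTheory.arg_maxP _ RR T t0 xpredT F isT) => t _ H.
by exists t => u; apply: H.
Qed.

Lemma coef_exists r d (G : 'M[RR]_(r, d)) : row_free G ->
  exists g : 'I_r -> 'I_d, injective g /\ exists C : 'M[RR]_(r, d),
    G = (G *m sel_mx g) *m C /\ forall i j, `|C i j| <= 1.
Proof.
move=> fG.
have rfT : row_full G^T by rewrite /row_full mxrank_tr.
set g0 := fullrankfun rfT.
have u0 : G *m sel_mx g0 \in unitmx.
  have -> : G *m sel_mx g0 = (rowsub g0 G^T)^T.
    by apply/matrixP => p i; rewrite sel_mxE !mxE.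
  by rewrite unitmx_tr; apply: fullrowsub_unit.
pose D (g : {ffun 'I_r -> 'I_d}) := `|\det (G *m sel_mx g)|.
have [g gmax] := fin_max g0 D.
set M := G *m sel_mx g.
have D0 : 0 < D g.
  apply: lt_le_trans (gmax g0); rewrite /D normr_gt0 -unitfE -unitmxE //.
have uM : M \in unitmx by rewrite unitmxE unitfE -normr_gt0.
exists g; split.
  move=> i i' e; apply/eqP/negPn/negP => ne.
  move: D0; rewrite /D -det_tr (determinant_alternate ne) ?normr0 ?ltxx //.
  have hT : forall a b, M^T a b = G b (g a).
    by move=> a b; rewrite [LHS]mxE sel_mxE.
  by move=> p; rewrite !hT e.
exists (invmx M *m G); split; first by rewrite mulmxA mulmxV // mul1mx.
move=> i j.
pose g' : {ffun 'I_r -> 'I_d} := [ffun t => if t == i then j else g t].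
have hcol : col' i (G *m sel_mx g') = col' i M.
  apply/matrixP => p t; rewrite [LHS]mxE [RHS]mxE !sel_mxE ffunE.
  by rewrite eq_sym (negbTE (neq_lift _ _)).
have hdet : \det (G *m sel_mx g') = \sum_l cofactor M l i * G l j.
  rewrite (expand_det_col _ i); apply: eq_bigr => l _.
  rewrite sel_mxE ffunE eqxx mulrC; congr (_ * _).
  by rewrite /cofactor hcol.
have hC : (invmx M *m G) i j = (\det M)^-1 * \det (G *m sel_mx g').
  rewrite hdet mxE mulr_sumr; apply: eq_bigr => l _.
  rewrite /invmx uM [in LHS]mxE -mulrA; congr (_ * (_ * _)); rewrite mxE //.
rewrite hC normrM normrV ?unitfE -?normr_gt0 -/(D g) //.
rewrite ler_pdivrMl // mulr1; exact: gmax.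
Qed.
Lemma ext_nat r d (g : 'I_r -> 'I_d) (d0 : 'I_d) : injective g ->
  forall t, (r + t <= d)%N -> exists F : nat -> 'I_d,
    (forall i : 'I_r, F i = g i) /\
    (forall i j, (i < r + t)%N -> (j < r + t)%N -> F i = F j -> i = j).
Proof.
move=> injg; elim=> [|t IH] hrt.
  exists (fun i => if insub i is Some i' then g i' else d0); split.
    by move=> i; rewrite valK.
  move=> i j; rewrite addn0 => hi hj.
  rewrite (insubT (fun x => x < r)%N hi) (insubT (fun x => x < r)%N hj) => /injg.
  by move/(congr1 val).
have hrt' : (r + t <= d)%N by rewrite addnS in hrt; apply: ltnW.
have [F [hF1 hF2]] := IH hrt'.
set Im := (fun i : 'I_(r + t) => F (val i)) @: (finset.setT : {set 'I_(r + t)}).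
have [x hx] : exists x : 'I_d, forall i, (i < r + t)%N -> F i != x.
  case: (pickP [pred x : 'I_d | x \notin Im]) => [x /= hx | hnone].
    exists x => i hi; apply: contra hx => /eqP <-.
    by apply/imsetP; exists (Ordinal hi); rewrite ?in_setT.
  have sub : (finset.setT : {set 'I_d}) \subset Im.
    by apply/fintype.subsetP => x _; move: (hnone x) => /= /negbFE.
  have := subset_leq_card sub; rewrite cardsT card_ord => hd.
  have := leq_trans hd (leq_imset_card _ _); rewrite ?cardsT card_ord => hd2.
  by move: hrt; rewrite addnS => /leq_trans /(_ hd2); rewrite ltnn.
exists (fun i => if i == (r + t)%N then x else F i); split.
  move=> i; have : (val i != r + t)%N by rewrite neq_ltn (leq_trans (ltn_ord i)) ?leq_addr.
  by move/negbTE => ->.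
move=> i j; rewrite addnS !ltnS => hi hj.
case: eqP => [ei|nei]; case: eqP => [ej|nej].
- by rewrite ei ej.
- move=> e; exfalso; have : (j < r + t)%N by rewrite ltn_neqAle hj andbT; apply/eqP.
  by move/hx; rewrite -e eqxx.
- move=> e; exfalso; have : (i < r + t)%N by rewrite ltn_neqAle hi andbT; apply/eqP.
  by move/hx; rewrite e eqxx.
- apply: hF2; rewrite ltn_neqAle ?hi ?hj andbT; apply/eqP => //.
Qed.

Lemma ext_fun r k d (g : 'I_r -> 'I_d) : injective g -> (r <= k)%N -> (k <= d)%N ->
  (0 < d)%N -> exists f : 'I_k -> 'I_d, injective f /\
    exists h : 'I_r -> 'I_k, forall i, f (h i) = g i.
Proof.
move=> injg hrk hkd d0.
have hkd' : (r + (k - r) <= d)%N by rewrite subnKC.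
have [F [hF1 hF2]] := @ext_nat r d g (Ordinal d0) injg (k - r) hkd'.
exists (fun i => F i); split.
  move=> i j /hF2; rewrite subnKC // => /(_ (ltn_ord i) (ltn_ord j)) e.
  exact: val_inj.
by exists (widen_ord hrk) => i /=.
Qed.

Lemma main_bound k d n (B N : 'M[RR]_(n, d)) : (\rank N <= k)%N -> (k <= d)%N ->
  (0 < d)%N -> exists f : 'I_k -> 'I_d, injective f /\ exists Y : 'M[RR]_(k, d),
    frob2 (B - (B *m sel_mx f) *m Y) <= (k.+1 * d.+1)%:R * frob2 (B - N).
Proof.
move=> hr hkd d0.
have [g [injg [C [hGC hCb]]]] := coef_exists (row_base_free N).
have [f [injf [h hfh]]] := ext_fun injg hr hkd d0.
have injh : injective h by move=> a b e; apply: injg; rewrite -!hfh e.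
pose Ph : 'M[RR]_(k, \rank N) := \matrix_(i, i') (h i' == i)%:R.
have hSP : sel_mx f *m Ph = sel_mx g.
  apply/matrixP => l i'; rewrite !mxE (bigD1 (h i')) //= !mxE eqxx mulr1.
  rewrite hfh big1 ?addr0 // => i hi; rewrite [Ph i i']mxE eq_sym (negbTE hi) mulr0 //.
exists f; split => //; exists (Ph *m C).
have hN : N *m sel_mx f *m (Ph *m C) = N.
  rewrite {1}(esym (mulmx_base N)) -(mulmxA _ (sel_mx f)) (mulmxA (sel_mx f)) hSP.
  by rewrite -[LHS]mulmxA (mulmxA (row_base N)) -hGC mulmx_base.
have -> : B - B *m sel_mx f *m (Ph *m C) =
    (B - N) - (B - N) *m sel_mx f *m (Ph *m C).
  by rewrite !mulmxBl hN opprB addrA subrK.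
apply: resid_bound => // i j.
rewrite mxE.
have [i' hi'|hno] := pickP (fun i' => h i' == i).
  rewrite (bigD1 i') //= big1 ?addr0.
    by rewrite mxE hi' mul1r; apply: hCb.
  move=> l hl; rewrite mxE.
  have : h l != i by apply: contra hl => /eqP e; apply/eqP; apply: injh; rewrite e (eqP hi').
  by move/negbTE => ->; rewrite mul0r.
rewrite big1 ?normr0 // => l _; rewrite mxE hno mul0r //.
Qed.
Lemma rank_mxsub_le m n m' n' (g : 'I_m' -> 'I_m) (h : 'I_n' -> 'I_n) (N : 'M[RR]_(m, n)) :
  (\rank (mxsub g h N) <= \rank N)%N.
Proof.
rewrite -[N in mxsub _ _ N]mulmx1 mxsub_mul.
apply: leq_trans (mxrankM_maxl _ _) _.
rewrite rowsubE; exact: mxrankM_maxr.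
Qed.

Lemma row_free_rowsub m m' n (w : 'I_m' -> 'I_m) (R : 'M[RR]_(m, n)) :
  injective w -> row_free R -> row_free (rowsub w R).
Proof.
move=> injw fR; apply: inj_row_free => v hv.
have : v *m rowsub w 1%:M = 0.
  by apply/eqP; rewrite -(mulmx_free_eq0 _ fR) -mulmxA -rowsubE hv.
move=> /matrixP e; apply/matrixP => i j; rewrite ord1.
move: (e 0 (w j)); rewrite !mxE (bigD1 j) //= !mxE eqxx mulr1 big1 ?addr0 //.
by move=> l /negbTE hl; rewrite !mxE (inj_eq injw) hl mulr0.
Qed.

Lemma rank_minors k m n (N : 'M[RR]_(m, n)) :
  (\rank N <= k)%N <->
  (forall (g : {ffun 'I_k.+1 -> 'I_m}) (h : {ffun 'I_k.+1 -> 'I_n}),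
      \det (mxsub g h N) = 0).
Proof.
split.
  move=> hr g h; apply/eqP; apply/negP => /negP.
  rewrite -unitfE -unitmxE => /mxrank_unit e.
  have := rank_mxsub_le g h N; rewrite e => /leq_trans /(_ hr).
  by rewrite ltnn.
move=> hall; rewrite leqNgt; apply/negP => hk.
set R := rowsub (maxrankfun N) N.
have fR : row_free R by apply: maxrowsub_free.
set R' := rowsub (widen_ord hk) R.
have fR' : row_free R'.
  by apply: row_free_rowsub fR => a b e; apply: val_inj; exact: (congr1 val e).
have rfT : row_full R'^T by rewrite /row_full mxrank_tr.
set h := fullrankfun rfT.
have := fullrowsub_unit rfT; rewrite -/h unitmxE unitfE.
set g : {ffun 'I_k.+1 -> 'I_m} := [ffun i => maxrankfun N (widen_ord hk i)].
have -> : rowsub h R'^T = (mxsub g h N)^T.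
  by apply/matrixP => i j; rewrite !mxE [g j]ffunE.
by rewrite det_tr hall eqxx.
Qed.
Local Open Scope classical_set_scope.
Section Cont.
Variable (T : topologicalType).

Lemma cont_sum (I : Type) (r : seq I) (P : pred I) (F : I -> T -> RR) :
  (forall i, continuous (F i)) -> continuous (fun v => \sum_(i <- r | P i) F i v).
Proof.
move=> hF; elim: r => [|a r IH].
  by under eq_fun do rewrite big_nil; apply: cst_continuous.
under eq_fun do rewrite big_cons.
case: (P a).
  by move=> x; apply: (@continuousD RR RR^o T); [apply: hF | apply: IH].
exact: IH.
Qed.

Lemma cont_prod (I : Type) (r : seq I) (P : pred I) (F : I -> T -> RR) :
  (forall i, continuous (F i)) -> continuous (fun v => \prod_(i <- r | P i) F i v).
Proof.
move=> hF; elim: r => [|a r IH].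
  by under eq_fun do rewrite big_nil; apply: cst_continuous.
under eq_fun do rewrite big_cons.
case: (P a).
  by move=> x; apply: (@continuousM RR T); [apply: hF | apply: IH].
exact: IH.
Qed.
Lemma cont_mul (f g : T -> RR) : continuous f -> continuous g ->
  continuous (fun v => f v * g v).
Proof. by move=> hf hg x; apply: (@continuousM RR T); [apply: hf | apply: hg]. Qed.

Lemma cont_add (f g : T -> RR) : continuous f -> continuous g ->
  continuous (fun v => f v + g v).
Proof. by move=> hf hg x; apply: (@continuousD RR RR^o T); [apply: hf | apply: hg]. Qed.

Lemma cont_opp (f : T -> RR) : continuous f -> continuous (fun v => - f v).
Proof. by move=> hf x; apply: (@continuousN RR RR^o T); apply: hf. Qed.

Lemma cont_cst (c : RR) : continuous (fun _ : T => c).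
Proof. move=> x; exact: cst_continuous. Qed.
End Cont.

Lemma cont_coord_vec m n (i : 'I_m) (j : 'I_n) :
  continuous (fun v : 'rV[RR]_(m * n) => vec_mx v i j).
Proof.
under eq_fun do rewrite mxE.
exact: coord_continuous.
Qed.

Lemma cont_det m n k (g : 'I_k -> 'I_m) (h : 'I_k -> 'I_n) :
  continuous (fun v : 'rV[RR]_(m * n) => \det (mxsub g h (vec_mx v))).
Proof.
apply: cont_sum => s.
apply: cont_mul; first exact: cont_cst.
apply: cont_prod => i.
under eq_fun do rewrite mxE.
exact: cont_coord_vec.
Qed.

Lemma cont_frob m n (B : 'M[RR]_(m, n)) :
  continuous (fun v : 'rV[RR]_(m * n) => frob2 (B - vec_mx v)).
Proof.
apply: cont_sum => i; apply: cont_sum => j.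
under eq_fun do rewrite expr2.
have hc : continuous (fun v : 'rV[RR]_(m * n) => (B - vec_mx v) i j).
  under eq_fun do rewrite !mxE.
  apply: cont_add; first exact: cont_cst.
  apply: cont_opp.
  exact: coord_continuous.
by apply: cont_mul; apply: hc.
Qed.

Lemma entry_le_frob m n (X : 'M[RR]_(m, n)) i j : X i j ^+ 2 <= frob2 X.
Proof.
rewrite /frob2 (bigD1 i) //= (bigD1 j) //= -addrA lerDl.
apply: addr_ge0; first by apply: sumr_ge0 => l _; apply: sqr_ge0.
by apply: sumr_ge0 => l _; apply: sumr_ge0 => t _; apply: sqr_ge0.
Qed.

Lemma abs_le_sq (x : RR) : `|x| <= 1 + x ^+ 2.
Proof.
have h : `|x| ^+ 2 = x ^+ 2 by rewrite real_normK ?num_real.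
have h0 : 0 <= `|x| by apply: normr_ge0.
rewrite -h; move: (`|x|) h0 => a ha; nra.
Qed.

Lemma entry_bound m n (B N : 'M[RR]_(m, n)) i j :
  frob2 (B - N) <= frob2 B -> `|N i j| <= 2 * (1 + frob2 B).
Proof.
move=> hf.
have e : N i j = B i j - (B - N) i j by rewrite !mxE opprB addrC subrK.
rewrite e; apply: le_trans (ler_normB _ _) _.
have h1 := abs_le_sq (B i j); have h2 := abs_le_sq ((B - N) i j).
have h3 := entry_le_frob B i j; have h4 := entry_le_frob (B - N) i j.
lra.
Qed.

Lemma best_exists m n k (B : 'M[RR]_(m, n)) : exists M, is_best_rank_approx k B M.
Proof.
pose Rk := [set v : 'rV[RR]_(m * n) | forall (g : {ffun 'I_k.+1 -> 'I_m})
   (h : {ffun 'I_k.+1 -> 'I_n}), \det (mxsub g h (vec_mx v)) = 0].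
pose A := Rk `&` [set v | frob2 (B - vec_mx v) <= frob2 B].
have cRk : closed Rk.
  have -> : Rk = \bigcap_(gh in [set: {ffun 'I_k.+1 -> 'I_m} * {ffun 'I_k.+1 -> 'I_n}])
      ((fun v => \det (mxsub gh.1 gh.2 (vec_mx v))) @^-1` [set x | x = 0]).
    apply/seteqP; split => v /=.
      by move=> hv gh _; apply: hv.
    by move=> hv g h; apply: (hv (g, h)).
  apply: closed_bigI => gh _; apply: preimage_closed; last exact: closed_eq.
  by move=> v _; apply: cont_det.
have cA : closed A.
  apply: closedI => //.
  have hc := @closed_le _ (frob2 B). have hp := @preimage_closed _ _ (fun v : 'rV[RR]_(m * n) => frob2 (B - vec_mx v)) _ (fun v _ => @cont_frob _ _ B v) hc. exact: hp.
have bA : bounded_set A.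
  exists (2 * (1 + frob2 B)); split; first by rewrite num_real.
  move=> M hM v [_ Av] /=.
  rewrite [`|v|]/Num.norm /= mx_normrE; apply: bigmax_le.
    apply: (le_trans _ (ltW hM)); apply: mulr_ge0 => //; apply: addr_ge0 => //.
    exact: frob2_ge0.
  move=> [a c] _ /=; rewrite ord1; apply: (le_trans _ (ltW hM)).
  case/mxvec_indexP: c => i j.
  have := entry_bound i j Av; rewrite mxE //.
have A0 : A (0 : 'rV[RR]_(m * n)).
  split.
    move=> g h; have : (\rank (vec_mx (0 : 'rV[RR]_(m * n))) <= k)%N.
      by rewrite linear0 mxrank0.
    by move/rank_minors; apply.
  by rewrite /= linear0 subr0.
have [c cA' cmin] := compact_EVT_min (ex_intro _ _ A0)
  (bounded_closed_compact bA cA) (continuous_subspaceT (@cont_frob _ _ B)).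
move: cA'; rewrite inE => -[cR cB].
exists (vec_mx c); split.
  by apply/rank_minors.
move=> N hN.
have [hle|hgt] := Order.TotalTheory.leP (frob2 (B - N)) (frob2 B).
  have := cmin (mxvec N); rewrite mxvecK; apply; rewrite inE; split => //.
    by move=> g h; rewrite mxvecK; move/rank_minors: hN; apply.
  by rewrite /= mxvecK.
apply: le_trans (ltW hgt); exact: cB.
Qed.

Local Close Scope classical_set_scope.

Lemma best_spec m n k (B : 'M[RR]_(m, n)) : is_best_rank_approx k B (best_rank_approx k B).
Proof.
rewrite /best_rank_approx; apply: epsilon_spec.
by have [M HM] := best_exists k B; exists M.
Qed.

Theorem lemma5p5 :
  exists C : RR,
  forall (k d n : nat), (1 <= k)%N -> (k < d)%N -> (1 <= n)%N ->
  forall B : 'M[RR]_(n, d),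
  exists f : 'I_k -> 'I_d, injective f /\
    frob2 (B - (B *m sel_mx f) *m pinv (B *m sel_mx f) *m B)
      <= C * (k * d)%:R * frob2 (B - best_rank_approx k B).
Proof.
exists 4 => k d n hk hkd hn B.
have [hr _] := best_spec k B.
have hd0 : (0 < d)%N by apply: leq_ltn_trans hkd.
have [f [injf [Y hY]]] := main_bound B hr (ltnW hkd) hd0.
exists f; split => //.
apply: le_trans (proj_min B Y (pinvP (B *m sel_mx f))) _.
apply: le_trans hY _.
apply: ler_wpM2r; first exact: frob2_ge0.
have hnat : (k.+1 * d.+1 <= 4 * (k * d))%N by nia.
by rewrite -(natrM RR 4) ler_nat.
Qed.
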